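(* Assume the Perturbed Composite Setting (see context). Suppose $\varepsilon\le\mu^2/(14\rho)$, let $\widetilde{\mathcal{T}}_1:=\{z\in\mathcal{X}:\frac{14\varepsilon}{\mu}<\mathrm{dist}(z,\mathcal{X}^* )<\frac{\mu}{4\rho}\}$, $\tilde L:=\sup\{\|\zeta\|:\zeta\in\partial\tilde f(x),x\in\widetilde{\mathcal{T}}_1\}$ (assumed finite) and $\tilde\tau=\mu/\tilde L$. Run the modified Polyak method: given $x_k$ choose $\zeta_k\in\partial\tilde f(x_k)$; if $\zeta_k=0$ stop, otherwise $x_{k+1}=\mathrm{proj}_{\mathcal{X}}\big(x_k-\frac{\tilde f(x_k)-\min_{\mathcal{X}}f}{\|\zeta_k\|^2}\zeta_k\big)$, starting from $x_0\in\widetilde{\mathcal{T}}_1$. Let $K$ be the first index with $\mathrm{dist}(x_K,\mathcal{X}^* )\le14\varepsilon/\mu$ ($K=\infty$ if there is none). Then the method does not stop before $K$, $x_k\in\widetilde{\mathcal{T}}_1$ for all $0\le k<K$, and $$\mathrm{dist}^2(x_{k+1},\mathcal{X}^* )\le\Big(1-\frac{13\tilde\tau^2}{56}\Big)\mathrm{dist}^2(x_k,\mathcal{X}^* )\quad\text{for all }0\le k<K.$$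
   Context: Perturbed Composite Setting: $\mathbf{E},\mathbf{Y}$ are Euclidean spaces ($\|\cdot\|$ the Euclidean norm on $\mathbf{E}$), $\mathcal{X}\subset\mathbf{E}$ nonempty closed convex, $F\colon\mathbf{E}\to\mathbf{Y}$ continuously differentiable with Jacobian $\nabla F(x)$, $h\colon\mathbf{Y}\to\mathbb{R}$ convex and $\eta$-Lipschitz with respect to a norm $|||\cdot|||$ on $\mathbf{Y}$. Set $f=h\circ F$, $f_x(y)=h(F(x)+\nabla F(x)(y-x))$, and assume $\mathcal{X}^*:=\operatorname{argmin}_{\mathcal{X}}f\ne\emptyset$ and constants $\mu,\rho>0$ with $|f(y)-f_x(y)|\le\frac\rho2\|y-x\|^2$ for all $x,y\in\mathcal{X}$ and $f(x)-\min_{\mathcal{X}}f\ge\mu\,\mathrm{dist}(x,\mathcal{X}^* )$ for all $x\in\mathcal{X}$. Fix $e\in\mathbf{Y}$ and set $\tilde f(x)=h(F(x)+e)$, $\varepsilon:=\eta|||e|||$, and $\partial\tilde f(x):=\nabla F(x)^*\partial h(F(x)+e)$ (convex subdifferential of $h$). $\mathrm{proj}_{\mathcal{X}}$ is the Euclidean projection and $\mathrm{dist}$ the Euclidean distance. *)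

(* Defs.v *)
From Stdlib Require Import Reals ClassicalEpsilon.
From mathcomp Require Import all_boot.
Set Implicit Arguments. Unset Strict Implicit.
Open Scope R_scope.

Definition vec (n : nat) := 'I_n -> R.
Definition vzero {n : nat} : vec n := fun _ => 0.
Definition vadd {n : nat} (x y : vec n) : vec n := fun i => x i + y i.
Definition vsub {n : nat} (x y : vec n) : vec n := fun i => x i - y i.
Definition vscale {n : nat} (c : R) (x : vec n) : vec n := fun i => c * x i.
Definition dot {n : nat} (x y : vec n) : R := \big[Rplus/0]_(i < n) (x i * y i).
Definition norm2 {n : nat} (x : vec n) : R := sqrt (dot x x).

Definition mat (m n : nat) := 'I_m -> 'I_n -> R.
Definition mulmv {m n : nat} (A : mat m n) (v : vec n) : vec m :=
  fun i => \big[Rplus/0]_(j < n) (A i j * v j).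
(* adjoint (transpose) A^* w, adjoint w.r.t. the Euclidean inner products *)
Definition mulmtv {m n : nat} (A : mat m n) (w : vec m) : vec n :=
  fun j => \big[Rplus/0]_(i < m) (A i j * w i).

Definition is_closed {n : nat} (S : vec n -> Prop) : Prop :=
  forall x, (forall eps, 0 < eps -> exists z, S z /\ norm2 (vsub z x) < eps) -> S x.
Definition is_convex_set {n : nat} (S : vec n -> Prop) : Prop :=
  forall x y t, S x -> S y -> 0 <= t <= 1 ->
    S (vadd (vscale t x) (vscale (1 - t) y)).

Definition is_convex_fun {m : nat} (h : vec m -> R) : Prop :=
  forall x y t, 0 <= t <= 1 ->
    h (vadd (vscale t x) (vscale (1 - t) y)) <= t * h x + (1 - t) * h y.

Definition is_norm {m : nat} (N : vec m -> R) : Prop :=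
  (forall x, N x = 0 -> x = vzero) /\
  (forall c x, N (vscale c x) = Rabs c * N x) /\
  (forall x y, N (vadd x y) <= N x + N y).

Definition lipschitz_wrt {m : nat} (N : vec m -> R) (eta : R) (h : vec m -> R) : Prop :=
  forall y z, Rabs (h y - h z) <= eta * N (vsub y z).

Definition has_jacobian {n m : nat} (F : vec n -> vec m) (J : vec n -> mat m n) : Prop :=
  forall x eps, 0 < eps -> exists del, 0 < del /\
    forall y, norm2 (vsub y x) < del ->
      norm2 (vsub (vsub (F y) (F x)) (mulmv (J x) (vsub y x))) <= eps * norm2 (vsub y x).
Definition jacobian_continuous {n m : nat} (J : vec n -> mat m n) : Prop :=
  forall x i j eps, 0 < eps -> exists del, 0 < del /\
    forall y, norm2 (vsub y x) < del -> Rabs (J y i j - J x i j) < eps.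

Definition is_glb (A : R -> Prop) (m : R) : Prop :=
  (forall a, A a -> m <= a) /\ (forall b, (forall a, A a -> b <= a) -> b <= m).
Definition Inf (A : R -> Prop) : R := epsilon (inhabits 0) (fun m => is_glb A m).
Definition Sup (A : R -> Prop) : R := epsilon (inhabits 0) (fun m => is_lub A m).

Definition set_dist {n : nat} (S : vec n -> Prop) (x : vec n) : R :=
  Inf (fun d => exists z, S z /\ d = norm2 (vsub x z)).

Definition argmin {n : nat} (X : vec n -> Prop) (f : vec n -> R) : vec n -> Prop :=
  fun z => X z /\ forall y, X y -> f z <= f y.

Definition is_proj {n : nat} (S : vec n -> Prop) (y p : vec n) : Prop :=
  S p /\ forall z, S z -> norm2 (vsub y p) <= norm2 (vsub y z).

Definition subdiff {m : nat} (h : vec m -> R) (y v : vec m) : Prop :=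
  forall z, h y + dot v (vsub z y) <= h z.

(* partial f~(x) := grad F(x)^* partial h(F(x) + e) *)
Definition subdiff_pert {n m : nat} (h : vec m -> R) (F : vec n -> vec m)
  (J : vec n -> mat m n) (e : vec m) (x g : vec n) : Prop :=
  exists v, subdiff h (vadd (F x) e) v /\ g = mulmtv (J x) v.

(* Main.v *)
Require Import Defs.
From HB Require Import structures.
From Stdlib Require Import Reals Lra FunctionalExtensionality ClassicalEpsilon.
From mathcomp Require Import all_boot.
Open Scope R_scope.
Set Implicit Arguments. Unset Strict Implicit.

HB.instance Definition _ := Monoid.isComLaw.Build R 0 Rplus (fun a b c => esym (Rplus_assoc a b c)) Rplus_comm Rplus_0_l.

Lemma sumD n (F G : 'I_n -> R) :
  \big[Rplus/0]_(i < n) (F i + G i) = \big[Rplus/0]_(i < n) F i + \big[Rplus/0]_(i < n) G i.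
Proof. by rewrite big_split. Qed.

Lemma sumZ n c (F : 'I_n -> R) :
  \big[Rplus/0]_(i < n) (c * F i) = c * \big[Rplus/0]_(i < n) F i.
Proof.
elim/big_rec2: _ => [|i y1 y2 _ ->]; first by rewrite Rmult_0_r.
by rewrite Rmult_plus_distr_l.
Qed.

Lemma sum_ge0 n (F : 'I_n -> R) : (forall i, 0 <= F i) -> 0 <= \big[Rplus/0]_(i < n) F i.
Proof.
move=> H; elim/big_rec: _ => [|i y _ Hy]; first lra.
have := H i; lra.
Qed.

Lemma dot_sym n (a b : vec n) : dot a b = dot b a.
Proof. rewrite /dot; apply: eq_bigr => i _; apply Rmult_comm. Qed.

Lemma dot_addl n (a b c : vec n) : dot (vadd a b) c = dot a c + dot b c.
Proof. rewrite /dot -sumD; apply: eq_bigr => i _; rewrite /vadd; ring. Qed.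

Lemma dot_scalel n s (a c : vec n) : dot (vscale s a) c = s * dot a c.
Proof. rewrite /dot -sumZ; apply: eq_bigr => i _; rewrite /vscale; ring. Qed.

Lemma dot_subl n (a b c : vec n) : dot (vsub a b) c = dot a c - dot b c.
Proof.
rewrite /dot.
have -> : \big[Rplus/0]_(i < n) (vsub a b i * c i) =
  \big[Rplus/0]_(i < n) (a i * c i + (-1) * (b i * c i)).
  by apply: eq_bigr => i _; rewrite /vsub; ring.
rewrite sumD sumZ; ring.
Qed.

Lemma dot_addr n (a b c : vec n) : dot c (vadd a b) = dot c a + dot c b.
Proof. by rewrite dot_sym dot_addl (dot_sym a) (dot_sym b). Qed.
Lemma dot_scaler n s (a c : vec n) : dot c (vscale s a) = s * dot c a.
Proof. by rewrite dot_sym dot_scalel dot_sym. Qed.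
Lemma dot_subr n (a b c : vec n) : dot c (vsub a b) = dot c a - dot c b.
Proof. by rewrite dot_sym dot_subl (dot_sym a) (dot_sym b). Qed.

Lemma dot_ge0 n (a : vec n) : 0 <= dot a a.
Proof. apply: sum_ge0 => i; apply Rle_0_sqr. Qed.

Lemma dot0l n (a : vec n) : dot vzero a = 0.
Proof.
rewrite /dot (eq_bigr (fun i => 0 * a i)); last by move=> i _; rewrite /vzero.
rewrite sumZ; ring.
Qed.

Lemma norm2_sq n (a : vec n) : norm2 a ^ 2 = dot a a.
Proof. rewrite /norm2 /= Rmult_1_r sqrt_sqrt //; apply dot_ge0. Qed.

Lemma norm2_ge0 n (a : vec n) : 0 <= norm2 a.
Proof. apply sqrt_pos. Qed.

Lemma adjoint m n (A : mat m n) (w : vec m) (v : vec n) :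
  dot (mulmtv A w) v = dot w (mulmv A v).
Proof.
rewrite /dot /mulmtv /mulmv.
rewrite (eq_bigr (fun j => \big[Rplus/0]_(i < m) (A i j * w i * v j))); last first.
  by move=> j _; rewrite Rmult_comm -sumZ; apply: eq_bigr => i _; ring.
rewrite exchange_big /=; apply: eq_bigr => i _.
rewrite -sumZ; apply: eq_bigr => j _; ring.
Qed.

Lemma glb_exists (A : R -> Prop) : (exists a, A a) -> (exists b, forall a, A a -> b <= a) ->
  exists g, is_glb A g.
Proof.
move=> [a Ha] [b Hb].
have [l [Hl1 Hl2]] : {l | is_lub (fun y => A (- y)) l}.
  apply completeness.
  - exists (- b) => y Hy; have := Hb _ Hy; rewrite /is_upper_bound; lra.
  - exists (- a); by rewrite Ropp_involutive.
exists (- l); split.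
- move=> c Hc; have : - c <= l by apply Hl1; rewrite Ropp_involutive.
  lra.
- move=> c Hc; have : l <= - c.
    apply Hl2 => y Hy; have := Hc _ Hy; lra.
  lra.
Qed.

Lemma Inf_spec (A : R -> Prop) : (exists a, A a) -> (exists b, forall a, A a -> b <= a) ->
  is_glb A (Inf A).
Proof.
move=> H1 H2; rewrite /Inf; apply (epsilon_spec (inhabits 0) (fun m => is_glb A m)).
by apply glb_exists.
Qed.

Lemma Sup_spec (A : R -> Prop) : (exists a, A a) -> (exists b, forall a, A a -> a <= b) ->
  is_lub A (Sup A).
Proof.
move=> [a Ha] [b Hb]; rewrite /Sup; apply (epsilon_spec (inhabits 0) (fun m => is_lub A m)).
have [l Hl] := completeness A (ex_intro _ b Hb) (ex_intro _ a Ha).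
by exists l.
Qed.

Section SD.
Variables (n : nat) (S : vec n -> Prop) (Sne : exists z, S z).

Lemma sd_spec x : is_glb (fun d => exists z, S z /\ d = norm2 (vsub x z)) (set_dist S x).
Proof.
apply Inf_spec.
- case: Sne => z Hz; by exists (norm2 (vsub x z)), z.
- exists 0 => a [z [_ ->]]; apply norm2_ge0.
Qed.

Lemma sd_le x z : S z -> set_dist S x <= norm2 (vsub x z).
Proof. move=> Hz; case: (sd_spec x) => H _; apply H; by exists z. Qed.

Lemma sd_ge0 x : 0 <= set_dist S x.
Proof. case: (sd_spec x) => _ H; apply H => a [z [_ ->]]; apply norm2_ge0. Qed.

Lemma sd_glb2 x c : (forall z, S z -> c <= norm2 (vsub x z) ^ 2) -> c <= set_dist S x ^ 2.
Proof.
move=> H.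
case: (Rle_lt_dec c 0) => Hc.
  have := pow2_ge_0 (set_dist S x); lra.
have Hq : sqrt c <= set_dist S x.
  case: (sd_spec x) => _ G; apply G => a [z [Hz ->]].
  rewrite -(sqrt_pow2 (norm2 (vsub x z))); last apply norm2_ge0.
  apply sqrt_le_1_alt; by apply H.
have : sqrt c ^ 2 <= set_dist S x ^ 2.
  apply pow_incr; split => //; apply sqrt_pos.
rewrite /= Rmult_1_r sqrt_sqrt; lra.
Qed.

Lemma sd_le2 x z : S z -> set_dist S x ^ 2 <= dot (vsub x z) (vsub x z).
Proof.
move=> Hz; rewrite -norm2_sq; apply pow_incr; split; [apply sd_ge0|by apply sd_le].
Qed.
End SD.

Lemma sub_expand n (u w : vec n) t :
  dot (vsub u (vscale t w)) (vsub u (vscale t w)) = dot u u - 2 * t * dot u w + t ^ 2 * dot w w.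
Proof.
rewrite !dot_subl !dot_subr !dot_scalel !dot_scaler (dot_sym w u); ring.
Qed.

Lemma proj_nonexp n (X : vec n -> Prop) y p z : is_convex_set X -> is_proj X y p -> X z ->
  dot (vsub p z) (vsub p z) <= dot (vsub y z) (vsub y z).
Proof.
move=> Hcv [Hp Hmin] Hz.
set u := vsub y p; set w := vsub z p.
have key : forall t, 0 < t <= 1 -> 2 * dot u w <= t * dot w w.
  move=> t Ht.
  have Hq := Hcv z p t Hz Hp (conj (Rlt_le _ _ (proj1 Ht)) (proj2 Ht)).
  have H1 := Hmin _ Hq.
  have E : vsub y (vadd (vscale t z) (vscale (1 - t) p)) = vsub u (vscale t w).
    apply functional_extensionality => i; rewrite /u /w /vsub /vadd /vscale; ring.
  rewrite E in H1.
  have H2 : dot u u <= dot (vsub u (vscale t w)) (vsub u (vscale t w)).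
    apply sqrt_le_0; try apply dot_ge0; exact H1.
  rewrite sub_expand in H2.
  have H4 : t * (2 * dot u w) <= t * (t * dot w w) by lra.
  apply Rmult_le_reg_l with t; lra.
have Huw : dot u w <= 0.
  case: (Rle_lt_dec (dot u w) 0) => // Hc.
  have Hw := dot_ge0 w.
  case: (Rle_lt_dec (dot w w) (dot u w)) => Hle.
    have := key 1 ltac:(lra); lra.
  have Ht : 0 < dot u w / dot w w <= 1.
    split; first by apply Rdiv_lt_0_compat; lra.
    apply Rmult_le_reg_r with (dot w w); first lra.
    rewrite /Rdiv Rmult_assoc Rinv_l; lra.
  have := key _ Ht.
  rewrite /Rdiv Rmult_assoc Rinv_l; lra.
have E1 : vsub y z = vsub u (vscale 1 w).
  apply functional_extensionality => i; rewrite /u /w /vsub /vscale; ring.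
have E2 : vsub p z = vscale (-1) w.
  apply functional_extensionality => i; rewrite /u /w /vsub /vscale; ring.
rewrite E1 E2 sub_expand dot_scalel dot_scaler.
have := dot_ge0 u. nra.
Qed.

Lemma Rabs_le_both a b : Rabs a <= b -> - b <= a /\ a <= b.
Proof. rewrite /Rabs; case: Rcase_abs => H0 H; split; lra. Qed.

Lemma sq_le_dot n (a : vec n) i : a i * a i <= dot a a.
Proof.
rewrite /dot (bigD1 i) //=.
rewrite -{1}(Rplus_0_r (a i * a i)); apply Rplus_le_compat_l.
apply: (big_ind (fun x => 0 <= x)) => //; [lra| move=> u w; lra| move=> j _; apply Rle_0_sqr].
Qed.

Lemma dot_pos n (a : vec n) : a <> vzero -> 0 < dot a a.
Proof.
move=> Ha; case: (Rle_lt_dec (dot a a) 0) => // H; exfalso; apply Ha.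
apply functional_extensionality => i; rewrite /vzero.
have := sq_le_dot a i; have := Rle_0_sqr (a i); rewrite /Rsqr => H1 H2.
nra.
Qed.

Lemma vsub_swap n (a b : vec n) : vsub a b = vscale (-1) (vsub b a).
Proof. apply functional_extensionality => i; rewrite /vsub /vscale; ring. Qed.

Lemma dot_swap n (a b : vec n) : dot (vsub a b) (vsub a b) = dot (vsub b a) (vsub b a).
Proof. rewrite (vsub_swap a b) dot_scalel dot_scaler; ring. Qed.

Theorem theorem9p5
  (n m : nat) (X : vec n -> Prop) (F : vec n -> vec m) (J : vec n -> mat m n)
  (h : vec m -> R) (N : vec m -> R) (eta mu rho fstar : R) (e : vec m)
  (x : nat -> vec n) (zeta : nat -> vec n)
  (HXne : exists z, X z) (HXcl : is_closed X) (HXcv : is_convex_set X)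
  (HF : has_jacobian F J) (HJ : jacobian_continuous J)
  (Hhc : is_convex_fun h) (HN : is_norm N) (Hlip : lipschitz_wrt N eta h)
  (Hmin : (exists z, X z /\ h (F z) = fstar) /\ (forall y, X y -> fstar <= h (F y)))
  (Hmu : 0 < mu) (Hrho : 0 < rho)
  (Hwc : forall x0 y, X x0 -> X y ->
     Rabs (h (F y) - h (vadd (F x0) (mulmv (J x0) (vsub y x0))))
       <= rho / 2 * (norm2 (vsub y x0)) ^ 2)
  (Hsharp : forall z, X z ->
     h (F z) - fstar >= mu * set_dist (argmin X (fun y => h (F y))) z) :
  let f := fun y => h (F y) in
  let Xs := argmin X f in
  let eps := eta * N e in
  let ft := fun y => h (vadd (F y) e) in
  let T1 := fun z => X z /\ 14 * eps / mu < set_dist Xs z < mu / (4 * rho) in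
  let Lt := Sup (fun r => exists z g, T1 z /\ subdiff_pert h F J e z g /\ r = norm2 g) in
  let tau := mu / Lt in
  eps <= mu ^ 2 / (14 * rho) ->
  (exists B, forall z g, T1 z -> subdiff_pert h F J e z g -> norm2 g <= B) ->
  T1 (x 0%nat) ->
  (forall k, (forall j, (j < k)%nat -> zeta j <> vzero) ->
     subdiff_pert h F J e (x k) (zeta k) /\
     (zeta k <> vzero ->
        is_proj X
          (vsub (x k) (vscale ((ft (x k) - fstar) / (norm2 (zeta k)) ^ 2) (zeta k)))
          (x (S k)))) ->
  forall k, (forall j, (j <= k)%nat -> 14 * eps / mu < set_dist Xs (x j)) ->
    zeta k <> vzero /\ T1 (x k) /\
    (set_dist Xs (x (S k))) ^ 2 <= (1 - 13 * tau ^ 2 / 56) * (set_dist Xs (x k)) ^ 2.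
Proof.
move=> f Xs eps ft T1 Lt tau Heps [B HB] HT0 Hstep.
have [[z0 [Hz0 Hfz0]] Hfs] := Hmin.
have Xsne : exists z, Xs z.
  exists z0; split => // y Hy; rewrite /f Hfz0; by apply Hfs.
have Xsval : forall z, Xs z -> X z /\ f z = fstar.
  move=> z [Hz Hm]; split => //; have := Hm _ Hz0; have := Hfs _ Hz; rewrite /f; lra.
have HLt : is_lub (fun r => exists z g, T1 z /\ subdiff_pert h F J e z g /\ r = norm2 g) Lt.
  apply Sup_spec.
  - have [Hs _] := Hstep 0%nat (fun j (Hj : (j < 0)%nat) => False_ind _ (notF Hj)).
    by exists (norm2 (zeta 0%nat)), (x 0%nat), (zeta 0%nat).
  - exists B => r [z [g [Hz [Hg ->]]]]; exact: HB Hz Hg.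
have core : forall k, T1 (x k) -> (forall j, (j < k)%nat -> zeta j <> vzero) ->
    zeta k <> vzero /\
    (set_dist Xs (x (S k))) ^ 2 <= (1 - 13 * tau ^ 2 / 56) * (set_dist Xs (x k)) ^ 2.
  move=> k [HyX [Hd1 Hd2]] Hprev.
  have [Hsd Hproj] := Hstep k Hprev.
  set y := x k in HyX Hd1 Hd2 Hsd Hproj *.
  set g := zeta k in Hsd Hproj *.
  set d := set_dist Xs y in Hd1 Hd2 *.
  have Hd0 : 0 <= d by apply sd_ge0.
  have P1 : 14 * eps < mu * d.
    have : 14 * eps / mu * mu < d * mu by apply Rmult_lt_compat_r.
    rewrite /Rdiv Rmult_assoc Rinv_l; lra.
  have P2 : 4 * (rho * d ^ 2) <= mu * d.
    have : d * (4 * rho) <= mu / (4 * rho) * (4 * rho).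
      apply Rmult_le_compat_r; lra.
    rewrite /Rdiv Rmult_assoc Rinv_l; last lra.
    move=> H; have : d * (d * (4 * rho)) <= d * (mu * 1) by apply Rmult_le_compat_l.
    rewrite /=; lra.
  have Hmd0 : 0 <= mu * d by apply Rmult_le_pos; lra.
  set A := ft y - fstar.
  have HA : A >= mu * d - eps.
    have H1 := Hlip (vadd (F y) e) (F y).
    have E : vsub (vadd (F y) e) (F y) = e.
      apply functional_extensionality => i; rewrite /vsub /vadd; ring.
    rewrite E in H1; have [H1a H1b] := Rabs_le_both H1.
    have H2 : h (F y) - fstar >= mu * d := Hsharp y HyX.
    rewrite /A /ft /eps; lra.
  case: Hsd => v [Hv Hg].
  have Hb : forall z, Xs z -> dot g (vsub y z) >= A - rho / 2 * dot (vsub y z) (vsub y z) - eps.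
    move=> z Hz; have [HzX Hfz] := Xsval z Hz.
    set w := mulmv (J y) (vsub z y).
    have H1 := Hv (vadd (vadd (F y) e) w).
    have E1 : vsub (vadd (vadd (F y) e) w) (vadd (F y) e) = w.
      apply functional_extensionality => i; rewrite /vsub /vadd; ring.
    rewrite E1 /w -adjoint -Hg in H1.
    have Eg : dot g (vsub z y) = -1 * dot g (vsub y z) by rewrite (vsub_swap z y) dot_scaler.
    rewrite Eg in H1.
    have H2 := Hlip (vadd (vadd (F y) e) w) (vadd (F y) w).
    have E2 : vsub (vadd (vadd (F y) e) w) (vadd (F y) w) = e.
      apply functional_extensionality => i; rewrite /vsub /vadd; ring.
    rewrite E2 in H2; have [H2a H2b] := Rabs_le_both H2.
    have H3 := Hwc y z HyX HzX.
    rewrite norm2_sq dot_swap in H3; have [H3a H3b] := Rabs_le_both H3.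
    rewrite /f in Hfz; rewrite /A /ft /eps.
    rewrite /w in H2a H2b; lra.
  have Hgnz : g <> vzero.
    move=> Hg0.
    have : 2 * (A - eps) / rho <= d ^ 2.
      apply sd_glb2 => // z Hz.
      have := Hb z Hz; rewrite Hg0 dot0l norm2_sq => H.
      apply Rmult_le_reg_r with rho => //.
      rewrite /Rdiv Rmult_assoc Rinv_l; lra.
    move=> H; have : 2 * (A - eps) / rho * rho <= d ^ 2 * rho by apply Rmult_le_compat_r; lra.
    rewrite /Rdiv Rmult_assoc Rinv_l; lra.
  split => //.
  have HZ := dot_pos Hgnz.
  set Z := dot g g in HZ.
  have HgL : norm2 g <= Lt.
    case: HLt => H _; apply H; by exists y, g; split; [split|split; [exists v|]].
  have HZL : Z <= Lt ^ 2.
    rewrite /Z -norm2_sq; apply pow_incr; split => //; apply norm2_ge0.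
  have Hng : 0 < norm2 g by apply sqrt_lt_R0.
  have HL0 : 0 < Lt by lra.
  have HApos : 0 < A by lra.
  set al := A / Z.
  have Hal : 0 <= al by apply Rlt_le, Rdiv_lt_0_compat.
  have HalZ : al * Z = A by rewrite /al /Rdiv Rmult_assoc Rinv_l; lra.
  have Hp := Hproj Hgnz.
  rewrite norm2_sq -/Z -/A -/al in Hp.
  set D := set_dist Xs (x k.+1).
  have HD : forall z, Xs z -> D ^ 2 <= dot (vsub y z) (vsub y z) * (1 + al * rho) - al * (A - 2 * eps).
    move=> z Hz; have [HzX _] := Xsval z Hz.
    have H1 := sd_le2 Xsne (x k.+1) Hz.
    have H2 := proj_nonexp HXcv Hp HzX.
    have E : vsub (vsub y (vscale al g)) z = vsub (vsub y z) (vscale al g).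
      apply functional_extensionality => i; rewrite /vsub /vscale; ring.
    rewrite E sub_expand -/Z (dot_sym _ g) in H2.
    have H3 := Hb z Hz.
    have : al * (dot g (vsub y z)) >= al * (A - rho / 2 * dot (vsub y z) (vsub y z) - eps).
      apply Rle_ge, Rmult_le_compat_l => //; lra.
    have : al ^ 2 * Z = al * A by rewrite -HalZ /=; ring.
    move=> H4 H5; rewrite -/D in H1; lra.
  have HD2 : (D ^ 2 + al * (A - 2 * eps)) / (1 + al * rho) <= d ^ 2.
    apply sd_glb2 => // z Hz; rewrite norm2_sq.
    have Hpos : 0 < 1 + al * rho by nra.
    apply Rmult_le_reg_r with (1 + al * rho) => //.
    rewrite /Rdiv Rmult_assoc Rinv_l; last lra.
    have := HD z Hz; lra.
  have HD3 : D ^ 2 <= d ^ 2 - al * (A - rho * d ^ 2 - 2 * eps).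
    have Hpos : 0 < 1 + al * rho by nra.
    have := Rmult_le_compat_r (1 + al * rho) _ _ (Rlt_le _ _ Hpos) HD2.
    rewrite /Rdiv Rmult_assoc Rinv_l; last lra.
    move=> H; nra.
  set Bq := A - rho * d ^ 2 - 2 * eps.
  have HBq : 15 / 28 * (mu * d) <= Bq by rewrite /Bq; lra.
  have HA2 : 13 / 14 * (mu * d) <= A by lra.
  have Hmd : 0 <= mu * d by apply Rmult_le_pos; lra.
  have HP : 13 / 56 * (mu * d) ^ 2 <= A * Bq.
    have := Rmult_le_compat _ _ _ _ (ltac:(lra) : 0 <= 13/14*(mu*d)) (ltac:(lra) : 0 <= 15/28*(mu*d)) HA2 HBq.
    have := pow2_ge_0 (mu * d); rewrite /=; lra.
  have HPZ : A * Bq / Lt ^ 2 <= al * Bq.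
    have Hinv : / Lt ^ 2 <= / Z by apply Rinv_le_contravar.
    have HABq : 0 <= A * Bq by have := pow2_ge_0 (mu * d); lra.
    have := Rmult_le_compat_l _ _ _ HABq Hinv.
    have -> : al * Bq = A * Bq * / Z by rewrite /al /Rdiv; ring.
    by rewrite /Rdiv.
  have Htau : 13 * tau ^ 2 / 56 * d ^ 2 = 13 / 56 * (mu * d) ^ 2 / Lt ^ 2.
    rewrite /tau; field; lra.
  have : 13 / 56 * (mu * d) ^ 2 / Lt ^ 2 <= A * Bq / Lt ^ 2.
    apply Rmult_le_compat_r => //; apply Rlt_le, Rinv_0_lt_compat, pow_lt => //.
  move=> Hl; rewrite -/D Rmult_minus_distr_r Rmult_1_l Htau; rewrite -/Bq in HD3; lra.
have Htau0 : 0 <= tau ^ 2 by apply pow2_ge_0.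
have main : forall k, (forall j, (j <= k)%nat -> 14 * eps / mu < set_dist Xs (x j)) ->
    T1 (x k) /\ (forall j, (j < k)%nat -> zeta j <> vzero).
  elim=> [|k IH] Hlb.
    by split => // j.
  have [HTk Hprev] : T1 (x k) /\ (forall j, (j < k)%nat -> zeta j <> vzero).
    apply IH => j Hj; apply Hlb; exact: (leq_trans Hj (leqnSn k)).
  have [Hnz Hc] := core k HTk Hprev.
  have [_ Hp] := Hstep k Hprev.
  have [HpX _] := Hp Hnz.
  split.
    split => //; split; first by apply Hlb.
    case: HTk => _ [_ Hub].
    have H0 := sd_ge0 Xsne (x k.+1); have H1 := sd_ge0 Xsne (x k).
    case: (Rlt_le_dec (set_dist Xs (x k.+1)) (mu / (4 * rho))) => // Hge.
    exfalso.
    have : set_dist Xs (x k) ^ 2 < set_dist Xs (x k.+1) ^ 2.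
      rewrite /=; nra.
    have : (1 - 13 * tau ^ 2 / 56) * set_dist Xs (x k) ^ 2 <= set_dist Xs (x k) ^ 2.
      have := pow2_ge_0 (set_dist Xs (x k)); nra.
    lra.
  move=> j; rewrite ltnS leq_eqVlt => /orP [/eqP -> //|Hj]; exact: Hprev.
move=> k Hlb.
have [HTk Hprev] := main k Hlb.
have [Hnz Hc] := core k HTk Hprev.
by split.
Qed.
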